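(* For every $\theta^{\max}\in(0,\pi]$ and every real $\theta<\theta^{\max}$, $$\sin\theta\ge \theta+\left(\frac{\sin\theta^{\max}-\theta^{\max}}{(\theta^{\max})^2}\right)\theta^2,$$ and for every $\theta^{\min}\in[-\pi,0)$ and every real $\theta>\theta^{\min}$, $$\sin\theta\le \theta+\left(\frac{\sin\theta^{\min}-\theta^{\min}}{(\theta^{\min})^2}\right)\theta^2.$$ Moreover, for all real $\theta$, $1-\tfrac12\theta^2\le\cos\theta\le 1$. *)

(* Defs.v *)
From Stdlib Require Export Reals.

(* Main.v *)
Require Import Defs.
From Stdlib Require Import Reals.
From Stdlib Require Import Lra Psatz.
From Coquelicot Require Import Coquelicot.
Open Scope R_scope.

Lemma hder t : t <> 0 -> is_derive (fun t => (t - sin t)/t^2) t ((2*sin t - t - t*cos t)/t^3).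
Proof. intros. auto_derive. { intro H0. apply H. nra. } field. auto. Qed.

Lemma cont_of_der (f : R -> R) (x l : R) : is_derive f x l -> continuity_pt f x.
Proof.
  intros H. apply continuity_pt_filterlim. apply (ex_derive_continuous (V:=R_NormedModule) f x). exists l; exact H.
Qed.

Lemma L1 u : 0 <= u <= PI/2 -> u * cos u <= sin u.
Proof.
  intros Hu.
  destruct (MVT_gen (fun u => sin u - u * cos u) 0 u (fun c => c * sin c)) as [c [Hc Heq]].
  - intros x _. auto_derive; auto. ring.
  - intros x _. apply (cont_of_der _ _ (x * sin x)). auto_derive; auto. ring.
  - rewrite Rmin_left in Hc by lra. rewrite Rmax_right in Hc by lra.
    rewrite sin_0, Rmult_0_l in Heq.
    assert (0 <= sin c) by (apply sin_ge_0; pose proof PI_RGT_0; lra).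
    assert (0 <= c * sin c * u) by (apply Rmult_le_pos; [apply Rmult_le_pos|]; lra).
    lra.
Qed.

Lemma L2 t : 0 <= t <= PI -> 0 <= 2*sin t - t - t*cos t.
Proof.
  intros Ht. set (u := t/2).
  assert (Ht2 : t = 2*u) by (unfold u; lra).
  assert (H1 := L1 u ltac:(unfold u; lra)).
  assert (Hc : 0 <= cos u) by (apply cos_ge_0; unfold u; pose proof PI_RGT_0; lra).
  rewrite Ht2, sin_2a, cos_2a_cos.
  nra.
Qed.

Lemma L3 th a : 0 < th -> th < a -> a <= PI ->
  (th - sin th)/th^2 <= (a - sin a)/a^2.
Proof.
  intros H0 H1 H2.
  destruct (MVT_gen (fun t => (t - sin t)/t^2) th a (fun t => (2*sin t - t - t*cos t)/t^3)) as [c [Hc Heq]].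
  - intros x Hx. rewrite Rmin_left in Hx by lra. apply hder. lra.
  - intros x Hx. rewrite Rmin_left in Hx by lra. rewrite Rmax_right in Hx by lra.
    apply (cont_of_der _ _ _ (hder x ltac:(lra))).
  - rewrite Rmin_left in Hc by lra. rewrite Rmax_right in Hc by lra.
    assert (0 <= (2*sin c - c - c*cos c)/c^3).
    { apply Rdiv_le_0_compat. apply L2; lra. apply pow_lt; lra. }
    assert (0 <= (2*sin c - c - c*cos c)/c^3 * (a - th)) by (apply Rmult_le_pos; lra).
    lra.
Qed.

Lemma sin_ge_x th : th <= 0 -> th <= sin th.
Proof.
  intros H. destruct (Req_dec th 0) as [->|Hn]. rewrite sin_0; lra.
  pose proof (sin_lt_x (-th) ltac:(lra)). rewrite sin_neg in H0. lra.
Qed.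

Lemma part1 : forall thmax : R, 0 < thmax <= PI ->
     forall th : R, th < thmax ->
       th + ((sin thmax - thmax) / (thmax ^ 2)) * th ^ 2 <= sin th.
Proof.
  intros a Ha th Hth.
  assert (Hc : (sin a - a) / a^2 <= 0).
  { pose proof (sin_lt_x a ltac:(lra)). assert (0 < / a^2) by (apply Rinv_0_lt_compat, pow_lt; lra).
    unfold Rdiv. nra. }
  destruct (Rle_or_lt th 0) as [Hle|Hlt].
  - pose proof (sin_ge_x th Hle). assert (0 <= th^2) by (apply pow2_ge_0). nra.
  - pose proof (L3 th a Hlt Hth (proj2 Ha)).
    assert (Hp : 0 < th^2) by (apply pow_lt; lra).
    replace ((sin a - a)/a^2) with (- ((a - sin a)/a^2)) by (field; lra).
    assert (E : (th - sin th) = (th - sin th)/th^2 * th^2) by (field; lra).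
    nra.
Qed.

Lemma sin_sq_le x : (sin x)^2 <= x^2.
Proof.
  assert (forall y, 0 <= y -> (sin y)^2 <= y^2).
  { intros y Hy. destruct (Req_dec y 0) as [->|Hn]. rewrite sin_0; lra.
    pose proof (sin_lt_x y ltac:(lra)). pose proof (SIN_bound y).
    destruct (Rle_or_lt 1 y). nra.
    assert (0 <= sin y) by (apply sin_ge_0; pose proof PI_RGT_0; pose proof PI2_1 ; lra). nra. }
  destruct (Rle_or_lt 0 x). auto.
  pose proof (H (-x) ltac:(lra)). rewrite sin_neg in H1. nra.
Qed.

Theorem corollary3 :
  (forall thmax : R, 0 < thmax <= PI ->
     forall th : R, th < thmax ->
       th + ((sin thmax - thmax) / (thmax ^ 2)) * th ^ 2 <= sin th) /\
  (forall thmin : R, - PI <= thmin < 0 ->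
     forall th : R, thmin < th ->
       sin th <= th + ((sin thmin - thmin) / (thmin ^ 2)) * th ^ 2) /\
  (forall th : R, 1 - / 2 * th ^ 2 <= cos th <= 1).
Proof.
  split; [exact part1|split].
  - intros m Hm th Hth.
    pose proof (part1 (-m) ltac:(lra) (-th) ltac:(lra)).
    rewrite sin_neg in H. rewrite sin_neg in H.
    replace ((sin m - m)/m^2) with (- ((- sin m - - m)/(-m)^2)) by (field; lra).
    replace ((-th)^2) with (th^2) in H by ring. lra.
  - intros th. split; [|apply COS_bound].
    replace (cos th) with (cos (2*(th/2))) by (f_equal; field).
    rewrite cos_2a_sin. pose proof (sin_sq_le (th/2)). nra.
Qed.
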